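(* Let $\rho:\mathbb R_+\to\mathbb R_+$ be concave with $\rho(0)=0$, $\rho(x)>0$ for $x>0$, $\rho'$ continuous on $(0,\infty)$ with values in $\mathbb R_+$, $\lim_{x\to0^+}\rho(x)/x=+\infty$, and $\int_0^\varepsilon\frac{1}{\rho(x)}\mathrm dx<\infty$ for some $\varepsilon>0$. Let $c\in\mathbb R_+$ be a constant, $\rho_c(x):=\rho(x)+c$, and $H_c(u):=\int_0^u\frac{1}{c+\rho(x)}\mathrm dx$ for $u\in\mathbb R_+$. Then $H_c$ is well-defined and strictly increasing on $\mathbb R_+$, $H_c(0)=0$ and $\lim_{u\to+\infty}H_c(u)=+\infty$. Moreover, denoting by $H_c^{-1}:\mathbb R_+\to\mathbb R_+$ the inverse function of $H_c$, for every $k_1\ge H_c(1)$ and $k_2,k_3>0$, $$H_c^{-1}(k_1+k_2)\le 2e^{k_2(\rho(1)+c)}H_c^{-1}(k_1)$$ and $$\rho_c\big(k_3H_c^{-1}(k_1+k_2)\big)\le 2e^{k_2(\rho(1)+c)}\rho_c\big(k_3H_c^{-1}(k_1)\big).$$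
   Context: $\mathbb R_+=[0,\infty)$. *)

(* Defs.v *)
From HB Require Import structures.
From mathcomp Require Import all_boot all_order all_algebra.
From mathcomp Require Import all_classical all_reals all_analysis.
Set Implicit Arguments. Unset Strict Implicit. Unset Printing Implicit Defensive.
Import Order.TTheory GRing.Theory Num.Theory.
Import numFieldNormedType.Exports.
Local Open Scope classical_set_scope.
Local Open Scope ring_scope.

(* H_c(u) := \int_0^u 1/(c + rho x) dx  (Lebesgue integral, extended-real valued;
   the point x = 0 is negligible, so the convention 0^-1 = 0 is irrelevant). *)
Definition Hc (R : realType) (rho : R -> R) (c u : R) : \bar R :=
  (\int[@lebesgue_measure R]_(x in [set x : R | (0 <= x <= u)%R]) ((c + rho x)^-1)%:E)%E.

Definition concave_on_Rplus (R : realType) (rho : R -> R) : Prop :=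
  forall x y t : R, 0 <= x -> 0 <= y -> 0 <= t <= 1 ->
    t * rho x + (1 - t) * rho y <= rho (t * x + (1 - t) * y).

(* Main.v *)
Require Import Defs.
From HB Require Import structures.
From mathcomp Require Import all_boot all_order all_algebra.
From mathcomp Require Import all_classical all_reals all_analysis.
From mathcomp Require Import ring lra measurable_realfun.
Import Order.TTheory GRing.Theory Num.Theory.
Import numFieldNormedType.Exports.
Local Open Scope classical_set_scope.
Local Open Scope ring_scope.
Lemma rho_mono (R : realType) (rho : R -> R) :
  concave_on_Rplus rho -> (forall x, 0 <= x -> 0 <= rho x) ->
  forall x y, 0 <= x -> x <= y -> rho x <= rho y.
Proof.
move=> hc hpos x y x0 xy.
rewrite leNgt; apply/negP => hlt.
have rx0 : 0 < rho x by apply: le_lt_trans hlt; apply: hpos; lra.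
have xy' : x < y.
  rewrite lt_neqAle xy andbT; apply/negP => /eqP e; move: hlt; rewrite e; lra.
pose d := rho x - rho y.
pose t := d / (2 * rho x).
have t0 : 0 < t by rewrite /t divr_gt0 // /d; lra.
have t1 : t <= 1.
  rewrite /t ler_pdivrMr; last lra.
  have := hpos y (le_trans x0 xy); rewrite /d; lra.
pose z := (y - (1 - t) * x) / t.
have z0 : 0 <= z.
  rewrite /z divr_ge0 //; last lra.
  have : 0 <= t * x by rewrite mulr_ge0 //; lra.
  lra.
have := hc z x t z0 x0.
have -> : t * z + (1 - t) * x = y by rewrite /z; field; lra.
move=> /(_ _) H; have {}H := H (ltac:(apply/andP; split; lra)).
have rz := hpos z z0.
have e : t * rho x = d / 2 by rewrite /t; field; lra.
have : 0 <= t * rho z by rewrite mulr_ge0 //; lra.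
rewrite /d in e; nra.
Qed.

Lemma rho_sub (R : realType) (rho : R -> R) :
  concave_on_Rplus rho -> rho 0 = 0 ->
  forall l y, 1 <= l -> 0 <= y -> rho (l * y) <= l * rho y.
Proof.
move=> hc h0 l y l1 y0.
have := hc (l * y) 0 (l^-1) (ltac:(rewrite mulr_ge0 //; lra)) (lexx 0).
rewrite h0 !mulr0 !addr0 mulrA mulVf ?mul1r; last lra.
have li0 : 0 <= l^-1 by rewrite invr_ge0; lra.
have li1 : l^-1 <= 1 by rewrite invf_le1; lra.
move=> /(_ (ltac:(by apply/andP; split))) H.
have : l * (l^-1 * rho (l * y)) <= l * rho y by rewrite ler_wpM2l //; lra.
by rewrite mulrA mulfV ?mul1r //; lra.
Qed.
Lemma f_cont (R : realType) (rho : R -> R) (c : R) :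
  (forall x, 0 < x -> 0 < rho x) -> (forall x, 0 < x -> derivable rho x 1) -> 0 <= c ->
  forall x, 0 < x -> {for x, continuous (fun x => (c + rho x)^-1)}.
Proof.
move=> hp hd c0 x x0.
apply: continuousV; first by have := hp x x0; rewrite lt0r => /andP[]; lra.
apply: continuousD; first exact: cst_continuous.
exact/differentiable_continuous/derivable1_diffP/hd.
Qed.

Lemma f_meas (R : realType) (rho : R -> R) (c : R) :
  (forall x, 0 < x -> 0 < rho x) -> (forall x, 0 < x -> derivable rho x 1) -> 0 <= c ->
  measurable_fun (`]0, +oo[ : set R) (fun x => (c + rho x)^-1).
Proof.
move=> hp hd c0; apply: measurable_realfun.open_continuous_measurable_fun.
  exact: interval_open.
move=> x; rewrite inE /= in_itv /= andbT => x0.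
exact: f_cont _ _ _ hp hd c0 x x0.
Qed.

Lemma fe_meas (R : realType) (rho : R -> R) (c : R) (b : R) :
  (forall x, 0 < x -> 0 < rho x) -> (forall x, 0 < x -> derivable rho x 1) -> 0 <= c ->
  0 <= b ->
  measurable_fun (`[0, b] : set R) (fun x => ((c + rho x)^-1)%:E).
Proof.
move=> hp hd c0 b0.
have m1 : measurable_fun (`]0, b]%classic : set R) (fun x => (c + rho x)^-1).
  have sub : (`]0, b]%classic : set R) `<=` `]0, +oo[%classic.
    by move=> x /=; rewrite !in_itv /= => /andP[->].
  exact: (measurable_funS (measurable_itv _) sub (f_meas _ _ _ hp hd c0)).
apply/measurable_EFinP.
have -> : `[0, b]%classic = [set 0] `|` `]0, b]%classic :> set R.
  apply/seteqP; split => x /=; rewrite !in_itv /=.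
    by move=> /andP[]; rewrite le_eqVlt => /predU1P[<-|->] ->; [left|right].
  by move=> [->|/andP[/ltW -> ->]] //; rewrite lexx.
apply/measurable_funU => //; split; first exact: measurable_fun_set1.
exact: m1.
Qed.

Lemma HcE (R : realType) (rho : R -> R) (c u : R) :
  Hc rho c u = (\int[lebesgue_measure]_(x in (`[0%R, u]%classic : set R)) ((c + rho x)^-1)%:E)%E.
Proof. by []. Qed.

Lemma Hc_split (R : realType) (rho : R -> R) (c a b : R) :
  (forall x, 0 < x -> 0 < rho x) -> (forall x, 0 < x -> derivable rho x 1) ->
  (forall x, 0 <= x -> 0 <= rho x) -> 0 <= c -> 0 <= a -> a <= b ->
  Hc rho c b = (Hc rho c a +
    \int[lebesgue_measure]_(x in (`]a, b]%classic : set R)) ((c + rho x)^-1)%:E)%E.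
Proof.
move=> hp hd hnn c0 a0 ab.
rewrite !HcE.
have E : (`[0, b]%classic : set R) = `[0, a]%classic `|` `]a, b]%classic.
  by rewrite -(@itv_bndbnd_setU _ _ _ (BRight a)) //= bnd_simp.
rewrite E ge0_integral_setU //.
- rewrite -E; apply: fe_meas => //; lra.
- move=> x; rewrite -E /= in_itv /= => /andP[x0 _].
  by rewrite lee_fin invr_ge0; have := hnn x x0; lra.
- apply/disj_setPS => x [] /=; rewrite !in_itv /= => /andP[_ xa] /andP[ax _]; lra.
Qed.

Lemma Hc0 (R : realType) (rho : R -> R) (c : R) : Hc rho c 0 = 0%E.
Proof. by rewrite HcE set_itv1 integral_set1. Qed.

Lemma int_lb_cst (R : realType) (rho : R -> R) (c a b : R) :
  concave_on_Rplus rho ->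
  (forall x, 0 < x -> 0 < rho x) -> (forall x, 0 < x -> derivable rho x 1) ->
  (forall x, 0 <= x -> 0 <= rho x) -> 0 <= c -> 0 <= a -> a <= b ->
  (((b - a) / (c + rho b))%:E <=
    \int[lebesgue_measure]_(x in (`]a, b]%classic : set R)) ((c + rho x)^-1)%:E)%E.
Proof.
move=> hc hp hd hnn c0 a0 ab.
have mab : (`]a, b]%classic : set R) `<=` `[0, b]%classic.
  by move=> x /=; rewrite !in_itv /= => /andP[/ltW ax ->]; rewrite andbT; lra.
have mF : measurable_fun (`]a, b]%classic : set R) (fun x => ((c + rho x)^-1)%:E).
  exact: (measurable_funS (measurable_itv _) mab (fe_meas _ _ _ _ hp hd c0 (le_trans a0 ab))).
case: (ltP a b) => ab'; last first.
  have -> : b = a by lra.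
  rewrite subrr mul0r; apply: integral_ge0 => x /=; rewrite in_itv /= => /andP[ax _].
  by rewrite lee_fin invr_ge0; have := hnn x (ltW (le_lt_trans a0 ax)); lra.
have rb : 0 < c + rho b by have := hp b (le_lt_trans a0 ab'); lra.
have -> : (((b - a) / (c + rho b))%R)%:E =
   (\int[lebesgue_measure]_(x in (`]a, b]%classic : set R)) (cst ((c + rho b)^-1)%:E) x)%E.
  rewrite integral_cst //= (lebesgue_measure_itv `]a, b]) /= lte_fin ab'.
  by rewrite -EFinD -EFinM mulrC.
eapply ge0_le_integral => //.
- by move=> x _; rewrite lee_fin invr_ge0; lra.
- move=> x /=; rewrite in_itv /= => /andP[ax xb].
  have x0 : 0 < x by lra.
  rewrite lee_fin lef_pV2 ?posrE; first last.
  + have := hp x x0; lra.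
  + lra.
  have := rho_mono _ _ hc hnn x b (ltW x0) xb; lra.
Qed.

Lemma g_cont (R : realType) (K x : R) : 0 < x -> {for x, continuous (fun y : R => K^-1 * y^-1)}.
Proof.
move=> x0.
apply: (@continuousM _ _ (cst K^-1) (@GRing.inv R)); first exact: cst_continuous.
apply: inv_continuous; lra.
Qed.

Lemma G_derive (R : realType) (K x : R) : 0 < x ->
  is_derive x 1 (fun y : R => K^-1 * ln y) (K^-1 * x^-1).
Proof.
move=> x0; have := is_deriveZ K^-1 (is_derive1_ln x0).
by [].
Qed.

Lemma int_ln (R : realType) (K a b : R) : 0 < a -> a < b ->
  (\int[lebesgue_measure]_(x in (`]a, b]%classic : set R)) ((K^-1 * x^-1)%R)%:E =
    ((K^-1 * ln b - K^-1 * ln a)%R)%:E)%E.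
Proof.
move=> a0 ab.
have mg : measurable_fun (`]0%R, +oo[%classic : set R) (fun y : R => K^-1 * y^-1).
  apply: measurable_realfun.open_continuous_measurable_fun; first exact: interval_open.
  move=> x; rewrite inE /= in_itv /= andbT => x0; exact: g_cont.
have sub : (`]a, b]%classic : set R) `<=` `]0%R, +oo[%classic.
  by move=> x /=; rewrite !in_itv /= andbT => /andP[ax _]; lra.
rewrite integral_itv_obnd_cbnd; last first.
  apply/measurable_EFinP; exact: (measurable_funS (measurable_itv _) sub mg).
rewrite (@continuous_FTC2 _ _ (fun y : R => K^-1 * ln y)) //.
- apply: continuous_in_subspaceT => x; rewrite inE /= in_itv /= => /andP[ax _].
  apply: g_cont; lra.
- split.
  + move=> x; rewrite in_itv /= => /andP[ax _].
    have := G_derive _ K x (lt_trans a0 ax); by case.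
  + apply: cvg_at_right_filter.
    have [] := G_derive _ K a a0 => dG _.
    have := differentiable_continuous (proj1 (derivable1_diffP _ _) dG); exact.
  + apply: cvg_at_left_filter.
    have [] := G_derive _ K b (lt_trans a0 ab) => dG _.
    have := differentiable_continuous (proj1 (derivable1_diffP _ _) dG); exact.
- move=> x; rewrite in_itv /= => /andP[ax _].
  rewrite derive1E.
  have := G_derive _ K x (lt_trans a0 ax) => H.
  by rewrite derive_val.
Qed.

Lemma int_lb_ln (R : realType) (rho : R -> R) (c a b : R) :
  concave_on_Rplus rho -> rho 0 = 0 ->
  (forall x, 0 < x -> 0 < rho x) -> (forall x, 0 < x -> derivable rho x 1) ->
  (forall x, 0 <= x -> 0 <= rho x) -> 0 <= c -> 1 <= a -> a <= b ->
  ((((rho 1 + c)^-1 * ln b - (rho 1 + c)^-1 * ln a)%R)%:E <=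
    \int[lebesgue_measure]_(x in (`]a, b]%classic : set R)) ((c + rho x)^-1)%:E)%E.
Proof.
move=> hc h0 hp hd hnn c0 a1 ab.
have K0 : 0 < rho 1 + c by have := hp 1 ltr01; lra.
case: (ltP a b) => ab'; last first.
  have -> : b = a by lra.
  rewrite subrr; apply: integral_ge0 => x /=; rewrite in_itv /= => /andP[ax _].
  by rewrite lee_fin invr_ge0; have := hnn x (ltW (lt_le_trans ltr01 (le_trans a1 (ltW ax)))); lra.
rewrite -int_ln; [|lra|lra].
have sub : (`]a, b]%classic : set R) `<=` `]0%R, +oo[%classic.
  by move=> x /=; rewrite !in_itv /= andbT => /andP[ax _]; lra.
have mab : (`]a, b]%classic : set R) `<=` `[0, b]%classic.
  by move=> x /=; rewrite !in_itv /= => /andP[/ltW ax ->]; rewrite andbT; lra.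
have mF : measurable_fun (`]a, b]%classic : set R) (fun x => ((c + rho x)^-1)%:E).
  exact: (measurable_funS (measurable_itv _) mab (fe_meas _ _ _ _ hp hd c0 (ltW (lt_le_trans ltr01 (le_trans a1 ab))))).
have mg : measurable_fun (`]0%R, +oo[%classic : set R) (fun y : R => (rho 1 + c)^-1 * y^-1).
  apply: measurable_realfun.open_continuous_measurable_fun; first exact: interval_open.
  move=> x; rewrite inE /= in_itv /= andbT => x0; exact: g_cont.
eapply ge0_le_integral => //.
- move=> x /=; rewrite in_itv /= => /andP[ax _].
  rewrite lee_fin mulr_ge0 // invr_ge0; lra.
- apply/measurable_EFinP; exact: (measurable_funS (measurable_itv _) sub mg).
- move=> x /=; rewrite in_itv /= => /andP[ax _].
  have x1 : 1 <= x by lra.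
  have x0 : 0 < x by lra.
  rewrite lee_fin -invfM lef_pV2 ?posrE; first last.
  + have := hp x x0; lra.
  + by rewrite mulr_gt0.
  have := rho_sub _ _ hc h0 x 1 x1 ler01; rewrite mulr1 => h.
  have : c <= (rho 1 + c) * x - rho 1 * x.
    have : c * 1 <= c * x by rewrite ler_wpM2l.
    lra.
  lra.


Qed.

Lemma int_ub_cst (R : realType) (rho : R -> R) (c a b : R) :
  concave_on_Rplus rho ->
  (forall x, 0 < x -> 0 < rho x) -> (forall x, 0 < x -> derivable rho x 1) ->
  (forall x, 0 <= x -> 0 <= rho x) -> 0 <= c -> 0 < a -> a <= b ->
  (\int[lebesgue_measure]_(x in (`]a, b]%classic : set R)) ((c + rho x)^-1)%:E <
    +oo)%E.
Proof.
move=> hc hp hd hnn c0 a0 ab.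
have mab : (`]a, b]%classic : set R) `<=` `[0, b]%classic.
  by move=> x /=; rewrite !in_itv /= => /andP[/ltW ax ->]; rewrite andbT; lra.
have mF : measurable_fun (`]a, b]%classic : set R) (fun x => ((c + rho x)^-1)%:E).
  exact: (measurable_funS (measurable_itv _) mab (fe_meas _ _ _ _ hp hd c0 (ltW (lt_le_trans a0 ab)))).
have ra : 0 < c + rho a by have := hp a a0; lra.
apply: (@le_lt_trans _ _
   (\int[lebesgue_measure]_(x in (`]a, b]%classic : set R)) (cst ((c + rho a)^-1)%:E) x)%E).
  eapply ge0_le_integral => //.
  - move=> x /=; rewrite in_itv /= => /andP[ax _].
    by rewrite lee_fin invr_ge0; have := hnn x (ltW (lt_trans a0 ax)); lra.
  - move=> x /=; rewrite in_itv /= => /andP[ax xb].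
    have x0 : 0 < x by lra.
    rewrite lee_fin lef_pV2 ?posrE; first last.
    + lra.
    + have := hp x x0; lra.
    have := rho_mono _ _ hc hnn a x (ltW a0) (ltW ax); lra.
rewrite integral_cst //= (lebesgue_measure_itv `]a, b]) /=.
by case: ifPn => _; rewrite ?mule0 // -EFinD -EFinM ltry.
Qed.

Lemma Hc_fin (R : realType) (rho : R -> R) (c u : R) :
  concave_on_Rplus rho -> rho 0 = 0 ->
  (forall x, 0 < x -> 0 < rho x) -> (forall x, 0 < x -> derivable rho x 1) ->
  (forall x, 0 <= x -> 0 <= rho x) -> 0 <= c ->
  (exists2 eps : R, 0 < eps &
     (\int[@lebesgue_measure R]_(x in [set x : R | (0 < x <= eps)%R]) ((rho x)^-1)%:E < +oo)%E) ->
  0 <= u -> (Hc rho c u < +oo)%E.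
Proof.
move=> hc h0 hp hd hnn c0 [eps eps0 heps] u0.
pose U := Num.max u eps.
have uU : u <= U by rewrite /U le_max lexx.
have eU : eps <= U by rewrite /U le_max lexx orbT.
apply: (@le_lt_trans _ _ (Hc rho c U)).
  rewrite (Hc_split _ _ _ _ _ hp hd hnn c0 u0 uU); apply: leeDl.
  apply: integral_ge0 => x /=; rewrite in_itv /= => /andP[ax _].
  by rewrite lee_fin invr_ge0; have := hnn x (ltW (le_lt_trans u0 ax)); lra.
rewrite (Hc_split _ _ _ _ _ hp hd hnn c0 (ltW eps0) eU).
apply: lte_add_pinfty; last exact: (int_ub_cst _ _ _ _ _ hc hp hd hnn c0 eps0 eU).
rewrite (Hc_split _ _ _ _ _ hp hd hnn c0 (lexx 0) (ltW eps0)) Hc0 add0e.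
have msub : (`]0%R, eps]%classic : set R) `<=` `]0%R, +oo[%classic.
  by move=> x /=; rewrite !in_itv /= andbT => /andP[ax _].
have mr : measurable_fun (`]0%R, eps]%classic : set R) (fun x => ((0 + rho x)^-1)%:E).
  apply/measurable_EFinP.
  exact: (measurable_funS (measurable_itv _) msub (f_meas _ _ _ hp hd (lexx 0))).
have mab : (`]0%R, eps]%classic : set R) `<=` `[0, eps]%classic.
  by move=> x /=; rewrite !in_itv /= => /andP[/ltW -> ->].
have mF : measurable_fun (`]0%R, eps]%classic : set R) (fun x => ((c + rho x)^-1)%:E).
  exact: (measurable_funS (measurable_itv _) mab (fe_meas _ _ _ _ hp hd c0 (ltW eps0))).
apply: (@le_lt_trans _ _
   (\int[lebesgue_measure]_(x in (`]0%R, eps]%classic : set R)) ((0 + rho x)^-1)%:E)%E).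
  eapply ge0_le_integral => //.
  - move=> x /=; rewrite in_itv /= => /andP[ax _].
    by rewrite lee_fin invr_ge0; have := hnn x (ltW ax); lra.
  - move=> x /=; rewrite in_itv /= => /andP[x0 xb].
    rewrite lee_fin lef_pV2 ?posrE; first last.
    + have := hp x x0; lra.
    + have := hp x x0; lra.
    lra.
have -> : (fun x => ((0 + rho x)^-1)%:E) = (fun x => ((rho x)^-1)%:E :> \bar R).
  by apply/funext => x; rewrite add0r.
exact: heps.
Qed.

Lemma Hc_ge0 (R : realType) (rho : R -> R) (c u : R) :
  (forall x, 0 <= x -> 0 <= rho x) -> 0 <= c -> (0 <= Hc rho c u)%E.
Proof.
move=> hnn c0; rewrite HcE; apply: integral_ge0 => x /=; rewrite in_itv /= => /andP[x0 _].
by rewrite lee_fin invr_ge0; have := hnn x x0; lra.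
Qed.

Lemma Hc_lt (R : realType) (rho : R -> R) (c u v : R) :
  concave_on_Rplus rho -> rho 0 = 0 ->
  (forall x, 0 < x -> 0 < rho x) -> (forall x, 0 < x -> derivable rho x 1) ->
  (forall x, 0 <= x -> 0 <= rho x) -> 0 <= c ->
  (exists2 eps : R, 0 < eps &
     (\int[@lebesgue_measure R]_(x in [set x : R | (0 < x <= eps)%R]) ((rho x)^-1)%:E < +oo)%E) ->
  0 <= u -> u < v -> (Hc rho c u < Hc rho c v)%E.
Proof.
move=> hc h0 hp hd hnn c0 heps u0 uv.
rewrite (Hc_split _ _ _ _ _ hp hd hnn c0 u0 (ltW uv)).
have hf := Hc_fin _ _ _ _ hc h0 hp hd hnn c0 heps u0.
have hg := Hc_ge0 _ _ c u hnn c0.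
rewrite lteDl; last by rewrite fin_numE; apply/andP; split; [rewrite gt_eqF// (lt_le_trans _ hg)// ltNyr|rewrite lt_eqF].
apply: lt_le_trans (int_lb_cst _ _ _ _ _ hc hp hd hnn c0 u0 (ltW uv)).
rewrite lte_fin divr_gt0 //; first lra.
have := hp v (le_lt_trans u0 uv); lra.
Qed.

Lemma lim_from_ln (R : realType) (H : R -> \bar R) (K : R) : 0 < K ->
  (forall u, 1 <= u -> (((K^-1 * ln u)%R)%:E <= H u)%E) ->
  H u @[u --> +oo] --> +oo%E.
Proof.
move=> K0 hH.
apply/cvgeyPge => A.
pose u0 := expR (K * Num.max A 0).
have u01 : 1 <= u0.
  rewrite /u0 -expR0 ler_expR mulr_ge0 //; first lra.
  by rewrite le_max lexx orbT.
near=> u.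
have uu0 : u0 <= u by near: u; apply: nbhs_pinfty_ge; exact: num_real.
apply: le_trans (hH u (le_trans u01 uu0)).
rewrite lee_fin.
have : ln u0 <= ln u by rewrite ler_ln // posrE; lra.
rewrite /u0 expRK => h.
have hA : A <= Num.max A 0 by rewrite le_max lexx.
have Ki : 0 <= K^-1 by rewrite invr_ge0; lra.
have := ler_wpM2l Ki h.
rewrite mulrA mulVf ?mul1r; [lra | lra].
Unshelve. all: by end_near.
Qed.

Theorem lemma2p2 (R : realType) (rho : R -> R) (c : R) :
  concave_on_Rplus rho ->
  rho 0 = 0 ->
  (forall x, 0 <= x -> 0 <= rho x) ->
  (forall x, 0 < x -> 0 < rho x) ->
  (forall x, 0 < x -> derivable rho x 1) ->
  (forall x, 0 < x -> {for x, continuous (derive1 rho)}) ->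
  (forall x, 0 < x -> 0 <= (derive1 rho) x) ->
  (rho x / x) @[x --> 0^'+] --> +oo ->
  (exists2 eps : R, 0 < eps &
     (\int[@lebesgue_measure R]_(x in [set x : R | (0 < x <= eps)%R]) ((rho x)^-1)%:E < +oo)%E) ->
  0 <= c ->
  (forall u, 0 <= u -> (Hc rho c u < +oo)%E) /\
  (forall u v, 0 <= u -> u < v -> (Hc rho c u < Hc rho c v)%E) /\
  Hc rho c 0 = 0%E /\
  Hc rho c u @[u --> +oo] --> +oo%E /\
  (forall Hinv : R -> R,
     (forall k, 0 <= k -> 0 <= Hinv k /\ Hc rho c (Hinv k) = k%:E) ->
     forall k1 k2 k3 : R, (Hc rho c 1 <= k1%:E)%E -> 0 < k2 -> 0 < k3 ->
       Hinv (k1 + k2) <= 2 * expR (k2 * (rho 1 + c)) * Hinv k1 /\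
       rho (k3 * Hinv (k1 + k2)) + c
         <= 2 * expR (k2 * (rho 1 + c)) * (rho (k3 * Hinv k1) + c)).
Proof.
move=> hc h0 hnn hp hd _ _ _ heps c0.
have K0 : 0 < rho 1 + c by have := hp 1 ltr01; lra.
have Hfin := fun u => Hc_fin _ _ c u hc h0 hp hd hnn c0 heps.
have Hlt := fun u v => Hc_lt _ _ c u v hc h0 hp hd hnn c0 heps.
have Hln : forall u, 1 <= u -> ((((rho 1 + c)^-1 * ln u)%R)%:E <= Hc rho c u)%E.
  move=> u u1.
  rewrite (Hc_split _ _ _ _ _ hp hd hnn c0 ler01 u1).
  have h1 := int_lb_ln _ _ _ _ _ hc h0 hp hd hnn c0 (lexx 1) u1.
  rewrite ln1 mulr0 subr0 in h1.
  apply: le_trans h1 _; rewrite addeC; apply: leeDl; exact: Hc_ge0.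
split; first exact: Hfin.
split; first exact: Hlt.
split; first exact: Hc0.
split.
  exact: (lim_from_ln _ _ _ K0 Hln).
move=> Hinv hHinv k1 k2 k3 hk1 k20 k30.
have k10 : 0 <= k1 by rewrite -lee_fin (le_trans _ hk1) // Hc_ge0.
have [u0 Hu] := hHinv k1 k10.
have [v0 Hv] := hHinv (k1 + k2) (ltac:(lra)).
move: u0 Hu v0 Hv; set u := Hinv k1; set v := Hinv (k1 + k2) => u0 Hu v0 Hv.
have u1 : 1 <= u.
  rewrite leNgt; apply/negP => ult.
  have := Hlt u 1 u0 ult; rewrite Hu => h.
  by have := lt_le_trans h hk1; rewrite ltxx.
have uv : u <= v.
  rewrite leNgt; apply/negP => vu.
  have := Hlt v u v0 vu; rewrite Hu Hv lte_fin; lra.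
have hI := int_lb_ln _ _ _ _ _ hc h0 hp hd hnn c0 u1 uv.
have := Hc_split _ _ _ _ _ hp hd hnn c0 u0 uv.
rewrite Hu Hv => e.
have : (k1%:E + (((rho 1 + c)^-1 * ln v - (rho 1 + c)^-1 * ln u)%R)%:E <= (k1 + k2)%:E)%E.
  by rewrite e leeD2l.
rewrite -EFinD lee_fin => hk.
have hk' : ln v - ln u <= k2 * (rho 1 + c).
  have := ler_wpM2l (ltW K0) (ltac:(lra) : (rho 1 + c)^-1 * (ln v - ln u) <= k2).
  by rewrite mulrA mulfV ?mul1r; [lra|lra].
set E := expR (k2 * (rho 1 + c)) in hk' *.
have E1 : 1 <= E by rewrite /E; have := expR_ge1Dx (k2 * (rho 1 + c)); have := mulr_gt0 k20 K0; lra.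
have hv : v <= u * E.
  rewrite -[v]lnK ?posrE; last lra.
  rewrite -[u in u * _]lnK ?posrE; last lra.
  by rewrite /E -expRD ler_expR; lra.
have uE : 0 <= u * E by rewrite mulr_ge0 //; lra.
split; first nra.
have k3v : k3 * v <= E * (k3 * u).
  have := ler_wpM2l (ltW k30) hv; rewrite (mulrC u) mulrA (mulrC k3) -mulrA; lra.
have r1 := rho_mono _ _ hc hnn (k3 * v) (E * (k3 * u)) (ltac:(rewrite mulr_ge0 //; lra)) k3v.
have r2 := rho_sub _ _ hc h0 E (k3 * u) E1 (ltac:(rewrite mulr_ge0 //; lra)).
have r3 : 0 <= rho (k3 * u) by apply: hnn; rewrite mulr_ge0 //; lra.
have r4 : c <= E * c by have := ler_wpM2r c0 E1; lra.
nra.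
Qed.
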